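(* Let $G$ be a simple, undirected, connected graph on $N$ vertices with degree sequence $d_1\le d_2\le\cdots\le d_N$, and let $H=\sum_{1\le i<j\le N}\frac{d_j}{d_i}$. Then $$R^+(G)\ge N(N-3)+H+\left[\frac{N(N-1)}{2}\right]^2\frac{1}{H}.$$
   Context: For vertices $i,j$ of $G$, $R_{ij}$ denotes the effective resistance between $i$ and $j$ when every edge of $G$ is a unit resistor. The additive degree-Kirchhoff index is $R^+(G)=\sum_{i<j}(d_i+d_j)R_{ij}$, where $d_i$ is the degree of vertex $i$. *)

(* Defs.v *)
From HB Require Import structures.
From mathcomp Require Import all_boot all_order all_algebra.
Set Implicit Arguments. Unset Strict Implicit. Unset Printing Implicit Defensive.
Import Order.TTheory GRing.Theory Num.Theory.
Local Open Scope ring_scope.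

Definition simple_graph (n : nat) (e : rel 'I_n) : Prop :=
  symmetric e /\ irreflexive e.

Definition connected_graph (n : nat) (e : rel 'I_n) : Prop :=
  forall x y : 'I_n, connect e x y.

Definition deg (n : nat) (e : rel 'I_n) (i : 'I_n) : nat :=
  #|[set j | e i j]|.

Definition laplacian (R : realFieldType) (n : nat) (e : rel 'I_n) : 'M[R]_n :=
  \matrix_(i, j) (if i == j then (deg e i)%:R
                  else if e i j then -1 else 0).

(* Effective resistance between i and j (all edges unit resistors):
   inject unit current at i, extract it at j; a potential vector x solves
   x L = e_i - e_j (L symmetric), obtained via the library partial inverse
   pinvmx (valid since e_i - e_j lies in the row space of L for a connected
   graph); R_ij is the potential difference x_i - x_j. *)
Definition eff_res (R : realFieldType) (n : nat) (e : rel 'I_n) (i j : 'I_n) : R :=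
  let u : 'rV[R]_n := delta_mx 0 i - delta_mx 0 j in
  let x := u *m pinvmx (laplacian R e) in
  x 0 i - x 0 j.

Definition add_deg_kirchhoff (R : realFieldType) (n : nat) (e : rel 'I_n) : R :=
  \sum_(i < n) \sum_(j < n | (i < j)%N)
     ((deg e i)%:R + (deg e j)%:R) * eff_res R e i j.

Definition Hsum (R : realFieldType) (n : nat) (e : rel 'I_n) : R :=
  \sum_(i < n) \sum_(j < n | (i < j)%N) (deg e j)%:R / (deg e i)%:R.

(* Main.v *)
Require Import Defs.
From HB Require Import structures.
From mathcomp Require Import all_boot all_order all_algebra.
From mathcomp Require Import ring lra zify.
Set Implicit Arguments. Unset Strict Implicit. Unset Printing Implicit Defensive.
Import Order.TTheory GRing.Theory Num.Theory.
Local Open Scope ring_scope.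

Section G.
Variables (R : realFieldType) (n : nat) (e : rel 'I_n).
Hypotheses (esym : symmetric e) (eirr : irreflexive e).

Definition ef (a b : 'I_n) : R := (e a b)%:R.

Lemma degE a : (deg e a)%:R = \sum_c ef a c.
Proof.
rewrite /deg -sum1_card natr_sum big_mkcond /=; apply: eq_bigr => c _.
by rewrite inE /ef; case: (e a c).
Qed.

Definition gf (z : 'I_n -> R) a := \sum_c ef a c * (z a - z c).

Lemma sum_delta (h : 'I_n -> R) i : \sum_a (a == i)%:R * h a = h i.
Proof.
rewrite (bigD1 i) //= eqxx mul1r big1 ?addr0 //.
by move=> a /negbTE ->; rewrite mul0r.
Qed.

Lemma sum_delta1 (i : 'I_n) : \sum_a (a == i)%:R = 1 :> R.
Proof. by rewrite -[RHS](sum_delta (fun _ => 1) i); apply: eq_bigr => a _; rewrite mulr1. Qed.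

Lemma lapE c a : laplacian R e c a = (c == a)%:R * (deg e a)%:R - ef c a.
Proof.
rewrite /laplacian mxE /ef; case: (c =P a) => [->|/eqP/negbTE h].
  by rewrite eirr mul1r subr0.
by rewrite mul0r sub0r; case: (e c a); rewrite ?oppr0.
Qed.

Lemma mulL (z : 'rV[R]_n) a : (z *m laplacian R e) 0 a = gf (fun c => z 0 c) a.
Proof.
rewrite mxE /gf.
under eq_bigr do rewrite lapE mulrBr.
rewrite sumrB.
under eq_bigr do rewrite mulrA [_ * (_ == _)%:R]mulrC -mulrA.
rewrite sum_delta.
under [X in _ = X]eq_bigr do rewrite mulrBr.
rewrite sumrB -mulr_suml -degE mulrC; congr (_ - _).
by apply: eq_bigr => c _; rewrite /ef esym mulrC.
Qed.

Definition Bf (z w : 'I_n -> R) :=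
  \sum_a \sum_b ef a b * (z a - z b) * (w a - w b).

Lemma B_g z w : Bf z w = 2 * \sum_a w a * gf z a.
Proof.
rewrite /Bf.
under eq_bigr do under eq_bigr do rewrite mulrBr.
under eq_bigr do rewrite sumrB.
rewrite sumrB.
have -> : \sum_a \sum_b ef a b * (z a - z b) * w b = - \sum_a w a * gf z a.
  rewrite exchange_big -sumrN; apply: eq_bigr => b _.
  rewrite /gf mulr_sumr -sumrN; apply: eq_bigr => a _.
  rewrite /ef esym; ring.
rewrite opprK mulr2n mulrDl mul1r; congr (_ + _).
apply: eq_bigr => a _; rewrite /gf mulr_sumr; apply: eq_bigr => b _; ring.
Qed.

Lemma B_ge0 z : 0 <= Bf z z.
Proof.
apply: sumr_ge0 => a _; apply: sumr_ge0 => b _.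
by rewrite -mulrA mulr_ge0 ?ler0n // -expr2 sqr_ge0.
Qed.

Lemma B_exp x y : Bf (fun a => x a - y a) (fun a => x a - y a) =
  Bf x x - 2 * Bf x y + Bf y y.
Proof.
rewrite /Bf mulr_sumr -sumrB -big_split /=; apply: eq_bigr => a _.
rewrite mulr_sumr -sumrB -big_split /=; apply: eq_bigr => b _; ring.
Qed.


Lemma sum_y (al be : R) i j (h : 'I_n -> R) :
  \sum_a (al * (a == i)%:R - be * (a == j)%:R) * h a = al * h i - be * h j.
Proof.
under eq_bigr do rewrite mulrBl -!mulrA.
by rewrite sumrB -!mulr_sumr !sum_delta.
Qed.

Lemma gf_y (al be : R) i j a :
  gf (fun c => al * (c == i)%:R - be * (c == j)%:R) a =
  (al * (a == i)%:R - be * (a == j)%:R) * (deg e a)%:R - (al * ef a i - be * ef a j).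
Proof.
rewrite /gf degE mulr_sumr.
under eq_bigr do rewrite mulrBr.
rewrite sumrB; congr (_ - _); first by apply: eq_bigr => c _; rewrite mulrC.
by rewrite -sum_y; apply: eq_bigr => c _; rewrite mulrC.
Qed.

Lemma Bzero (z : 'I_n -> R) : Bf z z = 0 -> forall a b, e a b -> z a = z b.
Proof.
move=> h0 a b eab.
have hin : forall a, 0 <= \sum_b ef a b * (z a - z b) * (z a - z b).
  move=> a'; apply: sumr_ge0 => b' _.
  by rewrite -mulrA mulr_ge0 ?ler0n // -expr2 sqr_ge0.
have hin' : forall a : 'I_n, true -> 0 <= \sum_b ef a b * (z a - z b) * (z a - z b).
  by move=> a' _; apply: hin.
move: h0; rewrite /Bf => h0.
have h1 := psumr_eq0P hin' h0 (i := a) isT.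
have hin2 : forall i : 'I_n, true -> 0 <= ef a i * (z a - z i) * (z a - z i).
  by move=> i _; rewrite -mulrA mulr_ge0 ?ler0n // -expr2 sqr_ge0.
have := psumr_eq0P hin2 h1 (i := b) isT.
rewrite /ef eab mul1r => /eqP; rewrite mulf_eq0 orbb subr_eq0 => /eqP //.
Qed.

Lemma const_conn (z : 'I_n -> R) : connected_graph e ->
  (forall a b, e a b -> z a = z b) -> forall a b, z a = z b.
Proof.
move=> hc hz a b; move: (hc a b) => /connectP [p].
elim: p a => [|c p IH] a /=; first by move=> _ ->.
by case/andP=> eac pc eb; rewrite (hz _ _ eac) (IH c pc eb).
Qed.


Lemma pair_bound i j (x : 'I_n -> R) : i != j ->
  (forall a, gf x a = (a == i)%:R - (a == j)%:R) ->
  (0 < deg e i)%N -> (0 < deg e j)%N ->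
  (deg e i)%:R^-1 + (deg e j)%:R^-1 - 2 * ef i j / ((deg e i)%:R * (deg e j)%:R)
    <= x i - x j.
Proof.
move=> nij hx di dj.
set Di : R := (deg e i)%:R; set Dj : R := (deg e j)%:R.
have Di0 : Di != 0 by rewrite pnatr_eq0 -lt0n.
have Dj0 : Dj != 0 by rewrite pnatr_eq0 -lt0n.
set al := Di^-1; set be := Dj^-1.
have hal : al * Di = 1 by rewrite mulVf.
have hbe : be * Dj = 1 by rewrite mulVf.
set y := fun c : 'I_n => al * (c == i)%:R - be * (c == j)%:R.
have uE : forall w : 'I_n -> R, \sum_a w a * gf x a = w i - w j.
  move=> w; under eq_bigr do rewrite hx mulrC mulrBl.
  by rewrite sumrB !sum_delta.
have Bxx : Bf x x = 2 * (x i - x j) by rewrite B_g uE.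
have Bxy : Bf y x = 2 * (al + be).
  have -> : Bf y x = Bf x y.
    by rewrite /Bf; apply: eq_bigr => a _; apply: eq_bigr => b _; rewrite mulrAC.
  rewrite B_g uE /y eqxx (negbTE nij) eq_sym (negbTE nij) eqxx.
  by congr (_ * _); rewrite /= !mulr1 !mulr0 !subr0 !sub0r opprK.
have Byy : Bf y y = 2 * (al + be + 2 * al * be * ef i j).
  rewrite B_g /y sum_y !gf_y eqxx (negbTE nij) eq_sym (negbTE nij) eqxx.
  rewrite /ef eirr (esym j i) -/Di -/Dj.
  rewrite /= ?mulr0 ?mulr1 ?subr0 ?sub0r.
  congr (_ * _); rewrite eirr /= mulr0 subr0.
  apply/eqP; rewrite -subr_eq0.
  rewrite (_ : _ - _ = al * (al * Di - 1) + be * (be * Dj - 1)); last by ring.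
  by rewrite hal hbe subrr !mulr0 addr0.
have := B_ge0 (fun a => x a - y a).
rewrite B_exp -/(Bf y y) Bxx Byy.
have -> : Bf x y = Bf y x by rewrite /Bf; apply: eq_bigr => a _; apply: eq_bigr => b _; rewrite mulrAC.
rewrite Bxy.
have -> : 2 * ef i j / (Di * Dj) = 2 * al * be * ef i j.
  by rewrite /al /be invfM; ring.
move=> h.
have : 0 <= 2 * ((x i - x j) - (al + be - 2 * al * be * ef i j)).
  by apply: le_trans h _; rewrite le_eqVlt; apply/orP; left; apply/eqP; ring.
rewrite pmulr_rge0 ?ltr0n // subr_ge0 //.
Qed.


Lemma rowspace (i j : 'I_n) : connected_graph e ->
  ((delta_mx 0 i - delta_mx 0 j : 'rV[R]_n) <= laplacian R e)%MS.
Proof.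
move=> hconn.
set L := laplacian R e.
pose one : 'cV[R]_n := const_mx 1.
have L1 : L *m one = 0.
  apply/matrixP => a b; rewrite [LHS]mxE [RHS]mxE.
  under eq_bigr do rewrite /L lapE /one mxE mulr1.
  rewrite sumrB -degE.
  under eq_bigr do rewrite eq_sym.
  by rewrite -(sum_delta (fun c => (deg e c)%:R)) subrr.
have u1 : (delta_mx 0 i - delta_mx 0 j : 'rV[R]_n) *m one = 0.
  apply/matrixP => a b; rewrite [LHS]mxE [RHS]mxE.
  rewrite (ord1 a).
  under eq_bigr do rewrite !mxE mulr1 /=.
  by rewrite sumrB !sum_delta1 subrr.
have kerL : (kermx L <= (const_mx 1 : 'rV[R]_n))%MS.
  apply/row_subP => k; set v := row k (kermx L).
  have vL : v *m L = 0 by rewrite /v -row_mul mulmx_ker row0.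
  clearbody v.
  have g0 : forall a, gf (fun c => v 0 c) a = 0 by move=> a; rewrite -mulL vL mxE.
  have Bz : Bf (fun c => v 0 c) (fun c => v 0 c) = 0.
    by rewrite B_g big1 ?mulr0 // => a _; rewrite g0 mulr0.
  have hc := const_conn hconn (Bzero Bz).
  have -> : v = v 0 i *: const_mx 1 by apply/rowP => a; rewrite !mxE (hc a i) mulr1.
  by rewrite scalemx_sub.
have rkL : (n - 1 <= \rank L)%N.
  have := mxrankS kerL; rewrite mxrank_ker.
  have := rank_leq_row (const_mx 1 : 'rV[R]_n).
  have := rank_leq_row L. lia.
have LS : (L <= kermx one)%MS by apply/sub_kermxP.
have rk1 : \rank one = 1%N.
  apply/eqP; rewrite eqn_leq rank_leq_col lt0n mxrank_eq0.
  apply/eqP => /matrixP/(_ i 0); rewrite !mxE => /eqP; rewrite oner_eq0 //.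
have SL : (kermx one <= L)%MS.
  by rewrite -(geq_leqif (mxrank_leqif_sup LS)) mxrank_ker rk1.
by apply: submx_trans SL; apply/sub_kermxP.
Qed.

End G.



Lemma sym_sum (R : realFieldType) (n : nat) (f : 'I_n -> 'I_n -> R) :
  (forall i j, f i j = f j i) ->
  2 * \sum_(i < n) \sum_(j < n | (i < j)%N) f i j = \sum_(i < n) \sum_(j < n) f i j - \sum_(i < n) f i i.
Proof.
move=> fs.
have E1 : forall i : 'I_n, \sum_(j < n) f i j = \sum_(j < n | (i < j)%N) f i j + f i i + \sum_(j < n | (j < i)%N) f i j.
  move=> i; rewrite (bigID (fun j : 'I_n => (i < j)%N)) /= -addrA; congr (_ + _).
  rewrite (bigD1 i) /= ?ltnn //; congr (_ + _); apply: eq_bigl => j.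
  by rewrite -val_eqE /=; lia.
under [X in _ = X - _]eq_bigr do rewrite E1.
rewrite !big_split /=.
have -> : \sum_(i < n) \sum_(j < n | (j < i)%N) f i j = \sum_(i < n) \sum_(j < n | (i < j)%N) f i j.
  rewrite (exchange_big_dep xpredT) //=; apply: eq_bigr => j _; apply: eq_bigr => i _.
  by rewrite fs.
by rewrite mulr2n mulrDl mul1r; ring.
Qed.

Lemma cauchy (R : realFieldType) (T : finType) (P : pred T) (a : T -> R) :
  (forall p, P p -> 0 < a p) ->
  (\sum_(p | P p) 1) ^+ 2 <= (\sum_(p | P p) a p) * (\sum_(p | P p) (a p)^-1).
Proof.
move=> apos.
rewrite expr2 mulr_suml; under eq_bigr do rewrite mul1r.
rewrite mulr_suml; under [X in _ <= X]eq_bigr do rewrite mulr_sumr.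
rewrite -(@ler_pM2l _ 2) // [X in _ <= X]mulr_natl mulr2n.
rewrite [X in _ <= _ + X](exchange_big) /= -big_split /= mulr_sumr.
apply: ler_sum => p Pp; rewrite -big_split mulr_sumr /=; apply: ler_sum => q Pq.
have hp := apos p Pp; have hq := apos q Pq.
rewrite mulr1 -subr_ge0.
have -> : a p * (a q)^-1 + a q * (a p)^-1 - 2 = (a p - a q) ^+ 2 / (a p * a q).
  by field; apply/andP; split; rewrite gt_eqF.
by rewrite divr_ge0 ?sqr_ge0 // mulr_ge0 // ltW.
Qed.

Lemma sumI (R : realFieldType) (N : nat) (x : R) : \sum_(i < N) x = x *+ N.
Proof. by rewrite big_const_ord; elim: N => //= k ->; rewrite mulrS. Qed.

Theorem theorem4 (R : realFieldType) (n : nat) (e : rel 'I_n) :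
  simple_graph e -> connected_graph e ->
  (forall i j : 'I_n, (i <= j)%N -> (deg e i <= deg e j)%N) ->
  add_deg_kirchhoff R e >=
    n%:R * (n%:R - 3) + Hsum R e
    + ((n%:R * (n%:R - 1) / 2) ^+ 2) / Hsum R e.
Proof.
move=> [esym eirr] hconn _.
case: n e esym eirr hconn => [|[|m]] e esym eirr hconn.
- by rewrite /add_deg_kirchhoff /Hsum !big_ord0 invr0 !mulr0 mul0r !addr0.
- rewrite /add_deg_kirchhoff /Hsum !big_ord1 big_mkcond big_ord1 /= big_mkcond big_ord1 /=.
  rewrite invr0 mulr0 addr0 addr0; lra.
set N := m.+2.
set D := fun a : 'I_N => (deg e a)%:R : R.
have dpos : forall a : 'I_N, (0 < deg e a)%N.
  move=> a; pose b : 'I_N := if a == ord0 then ord_max else ord0.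
  have nab : a != b.
    by rewrite /b; case: ifP => [/eqP ->|/negbT //]; rewrite -val_eqE.
  move: (hconn a b) => /connectP [[|c p]] /=.
    by move=> _ eab; rewrite eab eqxx in nab.
  case/andP => eac _ _; apply/card_gt0P; exists c; by rewrite inE.
have D0 : forall a, D a != 0 by move=> a; rewrite /D pnatr_eq0 -lt0n.
have Dge0 : forall a, 0 <= D a by move=> a; rewrite /D ler0n.
have key : forall i j : 'I_N, (i < j)%N ->
    (D i)^-1 + (D j)^-1 - 2 * ef R e i j / (D i * D j) <= eff_res R e i j.
  move=> i j lij; rewrite /eff_res /=.
  set u := (delta_mx 0 i - delta_mx 0 j : 'rV[R]_N).
  set x := u *m pinvmx _.
  have xL : x *m laplacian R e = u by apply: mulmxKpV; apply: rowspace.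
  apply: (pair_bound esym eirr (x := fun c => x 0 c)) => //.
    by rewrite -val_eqE neq_ltn lij.
  by move=> a; rewrite -mulL // xL !mxE eqxx.
set M := \sum_(i < N) \sum_(j < N | (i < j)%N) (1 : R).
set K := \sum_(i < N) \sum_(j < N | (i < j)%N) D i / D j.
set E := \sum_(i < N) \sum_(j < N | (i < j)%N) ef R e i j * ((D i)^-1 + (D j)^-1).
have HsE : Hsum R e = \sum_(i < N) \sum_(j < N | (i < j)%N) D j / D i by [].
have step1 : 2 * M + Hsum R e + K - 2 * E <= add_deg_kirchhoff R e.
  have -> : 2 * M + Hsum R e + K - 2 * E = \sum_(i < N) \sum_(j < N | (i < j)%N)
      (D i + D j) * ((D i)^-1 + (D j)^-1 - 2 * ef R e i j / (D i * D j)).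
    rewrite HsE /M /K /E !mulr_sumr -!big_split /= -sumrB; apply: eq_bigr => i _.
    rewrite !mulr_sumr -!big_split /= -sumrB; apply: eq_bigr => j _.
    by field; rewrite !pnatr_eq0 -!lt0n !dpos.
  apply: ler_sum => i _; apply: ler_sum => j lij.
  by apply: ler_wpM2l; [rewrite addr_ge0 | apply: key].
have hM : 2 * M = N%:R * N%:R - N%:R.
  rewrite /M (@sym_sum R N (fun _ _ => (1 : R))) //.
  under eq_bigr do rewrite sumI.
  by rewrite !sumI -mulr_natl mulr1 !mulr_natr.
have hE : E = N%:R.
  have : 2 * E = 2 * N%:R.
    rewrite /E (@sym_sum R N (fun i j => ef R e i j * ((D i)^-1 + (D j)^-1))); last first.
      by move=> i j; rewrite /ef esym addrC.
    rewrite [X in _ - X]big1 ?subr0; last by move=> i _; rewrite /ef eirr mul0r.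
    under eq_bigr do under eq_bigr do rewrite mulrDr.
    under eq_bigr do rewrite big_split /=.
    rewrite big_split /= [X in _ + X]exchange_big /=.
    have h1 : forall i : 'I_N, \sum_(j < N) ef R e i j * (D i)^-1 = 1.
      by move=> i; rewrite -mulr_suml -degE mulfV // pnatr_eq0 -lt0n dpos.
    under eq_bigr do rewrite h1.
    under [X in _ + X]eq_bigr => j _.
      under eq_bigr => i _ do rewrite /ef esym -/(ef R e j i).
      rewrite h1. over.
    by rewrite !sumI -mulr_natl mulr1 mulr2n mulrDl mul1r.
  by move=> h; apply: (mulfI _ h); rewrite pnatr_eq0.
have hK : M ^+ 2 / Hsum R e <= K.
  have Kge0 : 0 <= K.
    by apply: sumr_ge0 => i _; apply: sumr_ge0 => j _; rewrite divr_ge0.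
  have Hge0 : 0 <= Hsum R e.
    by apply: sumr_ge0 => i _; apply: sumr_ge0 => j _; rewrite divr_ge0.
  have [->|Hne] := eqVneq (Hsum R e) 0; first by rewrite invr0 mulr0.
  have Hpos : 0 < Hsum R e by rewrite lt_def Hne.
  rewrite ler_pdivrMr // mulrC.
  have C := @cauchy R _ (fun p : 'I_N * 'I_N => (p.1 < p.2)%N) (fun p => D p.2 / D p.1).
  have eK : K = \sum_(p : 'I_N * 'I_N | (p.1 < p.2)%N) (D p.2 / D p.1)^-1.
    by rewrite /K pair_big_dep /=; apply: eq_bigr => p _; rewrite invf_div.
  rewrite eK /M HsE !pair_big_dep /=; apply: C => p _.
  by rewrite divr_gt0 // lt_def ?D0 ?Dge0.
have hM2 : M = N%:R * (N%:R - 1) / 2.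
  apply: (mulfI (x := 2)); first by rewrite pnatr_eq0.
  by rewrite hM; field; rewrite ?pnatr_eq0.
rewrite -hM2.
apply: le_trans step1.
rewrite hE hM.
have : N%:R * (N%:R - 3) = N%:R * N%:R - N%:R - 2 * N%:R :> R by ring.
move=> ->. lra.
Qed.
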